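(* Let $\varsigma=(\varsigma_1,\dots,\varsigma_K)\in\Gamma(\mathscr M_1)\oplus\dots\oplus\Gamma(\mathscr M_K)$ have the boundary decomposition property, and let $0\le m<r_K$. Suppose that every $\varsigma_k$ has an $m$-th subdiagonal matrix representation. Then there is a continuous section $G\in\Gamma(\mathscr V^{(m)})$ such that \[G|_{\alpha^i(\overline{Y_k})}=\varsigma_k^{(i)}\circ\alpha^{-i}|_{\alpha^i(\overline{Y_k})}\quad\text{for all }1\le k\le K,\ 0\le i\le r_k-1,\] and, provided $m\ge 1$, $G$ vanishes on $\alpha^{-m}(Y)\cup\alpha^{-m+1}(Y)\cup\dots\cup\alpha^{-1}(Y)$.
   Context: Let $X$ be an infinite compact metric space, $\alpha:X\to X$ a minimal homeomorphism, $\mathscr V$ a Hermitian complex line bundle over $X$, and $Y\subset X$ closed with non-empty interior. For $y\in Y$ let $r_Y(y)=\min\{n\ge1:\alpha^n(y)\in Y\}$, with distinct values $r_1<\dots<r_K$, and $Y_k=\{y\in Y:r_Y(y)=r_k\}$. Let $\mathscr V^{(0)}=X\times\mathbb C$ and $\mathscr V^{(n)}=(\alpha^{n-1})^*\mathscr V\otimes\cdots\otimes\alpha^*\mathscr V\otimes\mathscr V$, so $\mathscr V^{(n)}_x=\mathscr V_{\alpha^{n-1}(x)}\otimes\cdots\otimes\mathscr V_x=\mathscr V^{(n-m)}_{\alpha^m(x)}\otimes\mathscr V^{(m)}_x$ for $0\le m\le n$; $\Gamma(\mathscr V^{(m)})$ is its space of continuous sections. Let $\mathscr D^{(n)}=\mathscr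 V^{(0)}\oplus\cdots\oplus\mathscr V^{(n-1)}$, $\mathscr M_k=\mathrm{End}(\mathscr D^{(r_k)})|_{\overline{Y_k}}$ and $\Gamma(\mathscr M_k)$ its continuous sections. $\varsigma_k\in\Gamma(\mathscr M_k)$ has an $m$-th (lower) subdiagonal matrix representation if for every $x\in\overline{Y_k}$, $\varsigma_k(x)$ maps $\mathscr V^{(i)}_x$ into $\mathscr V^{(i+m)}_x$ for $i<r_k-m$ and maps $\mathscr V^{(i)}_x$ to $0$ for $r_k-m\le i<r_k$ (so $\varsigma_k=0$ if $m\ge r_k$). In that case, since all these spaces are one-dimensional, for $i<r_k-m$ there is a unique $\varsigma_k^{(i)}(x)\in\mathscr V^{(m)}_{\alpha^i(x)}$ with $\varsigma_k(x)v=\varsigma_k^{(i)}(x)\otimes v$ for $v\in\mathscr V^{(i)}_x$ (using $\mathscr V^{(i+m)}_x=\mathscr V^{(m)}_{\alpha^i(x)}\otimes\mathscr V^{(i)}_x$), and $\varsigma_k^{(i)}(x):=0$ for $r_k-m\le i\le r_k-1$. Boundary decomposition property: $\varsigma=(\varsigma_1,\dots,\varsigma_K)$ has it if for every $k$ and every $x\in\overline{Y_k}\setminus Y_k$ the following holds. There are indices $t_1,\dots,t_m<k$ with $r_{t_1}+\dots+r_{t_m}=r_k$ and $x\in Y_{t_1}\cap\alpha^{-r_{t_1}}(Y_{t_2})\cap\dots\cap\alpha^{-(r_{t_1}+\dots+r_{t_{m-1}})}(Y_{t_m})$. Let $R_0=0$, $R_s=r_{t_1}+\dots+r_{t_s}$,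 and identify the $s$-th component $\mathscr V^{(R_{s-1})}_x\oplus\dots\oplus\mathscr V^{(R_s-1)}_x$ of $\mathscr D^{(r_k)}_x$ with $\mathscr D^{(r_{t_s})}_{\alpha^{R_{s-1}}(x)}\otimes\mathscr V^{(R_{s-1})}_x$. The requirement is that $\varsigma_k(x)$ restricted to the $s$-th component equals $\varsigma_{t_s}(\alpha^{R_{s-1}}(x))\otimes\mathrm{id}_{\mathscr V^{(R_{s-1})}_x}$ for every $s$. *)

(* Defs.v *)
From HB Require Import structures.
From mathcomp Require Import all_boot all_order all_algebra.
From mathcomp Require Import all_classical all_reals all_analysis.
From mathcomp.real_closed Require Import complex.
Set Implicit Arguments. Unset Strict Implicit. Unset Printing Implicit Defensive.
Import Order.TTheory GRing.Theory Num.Theory.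
Import numFieldNormedType.Exports.
Local Open Scope classical_set_scope.
Local Open Scope ring_scope.

(* Complex-valued continuity on a subspace: real and imaginary parts are     *)
(* continuous (R[i] carries no topology in the libraries).                  *)
Definition ccontinuous_within (R : realType) (X : topologicalType)
  (A : set X) (f : X -> R[i]) : Prop :=
  {within A, continuous (fun x => complex.Re (f x))} /\
  {within A, continuous (fun x => complex.Im (f x))}.

Definition homeo (X : topologicalType) (alpha beta : X -> X) : Prop :=
  [/\ continuous alpha, continuous beta, cancel alpha beta & cancel beta alpha].

Definition minimal_homeo (X : topologicalType) (alpha beta : X -> X) : Prop :=
  forall x : X,
    closure [set y | exists n : nat, y = iter n alpha x \/ y = iter n beta x]
    = [set: X].

Definition first_return (X : Type) (alpha : X -> X) (Y : set X) (y : X)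
  (n : nat) : Prop :=
  [/\ (0 < n)%N, Y (iter n alpha y) &
      forall j, (0 < j < n)%N -> ~ Y (iter j alpha y)].

Definition return_values (X : Type) (alpha : X -> X) (Y : set X) (K : nat)
  (r : nat -> nat) : Prop :=
  [/\ forall k l, (1 <= k)%N -> (k < l)%N -> (l <= K)%N -> (r k < r l)%N,
      forall k, (1 <= k <= K)%N -> exists2 y, Y y & first_return alpha Y y (r k) &
      forall y, Y y -> exists2 k, (1 <= k <= K)%N & first_return alpha Y y (r k)].

Definition Yk (X : Type) (alpha : X -> X) (Y : set X) (r : nat -> nat)
  (k : nat) : set X :=
  [set y | Y y /\ first_return alpha Y y (r k)].

(* The Hermitian line bundle V is given by a (unitary) cocycle:             *)
(* an open cover (U i)_{i : I} of X and continuous transition functions     *)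
(* g i j : U i /\ U j -> S^1 with g i j * g j k = g i k; a point of V_x is   *)
(* a family of coordinates c with c_i = g i j x * c_j.                       *)
Definition hlb_data (R : realType) (X : topologicalType) (I : Type)
  (U : I -> set X) (g : I -> I -> X -> R[i]) : Prop :=
  [/\ forall i, open (U i),
      forall x, exists i, U i x,
      forall i j, ccontinuous_within (U i `&` U j) (g i j),
      forall i j x, U i x -> U j x -> `|g i j x| = 1 &
      forall i j k x, U i x -> U j x -> U k x -> g i j x * g j k x = g i k x].

(* Charts of V^(n) = (alpha^{n-1})^*V (x) ... (x) alpha^*V (x) V:            *)
(* indexed by t : nat -> I (only t 0, ..., t (n-1) matter).                  *)
Definition Un (X : Type) (I : Type) (alpha : X -> X) (U : I -> set X)
  (n : nat) (t : nat -> I) : set X :=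
  [set x | forall l, (l < n)%N -> U (t l) (iter l alpha x)].

Definition gn (R : realType) (X : Type) (I : Type) (alpha : X -> X)
  (g : I -> I -> X -> R[i]) (n : nat) (t t' : nat -> I) (x : X) : R[i] :=
  \prod_(l < n) g (t l) (t' l) (iter l alpha x).

Definition shiftn (I : Type) (i : nat) (t : nat -> I) : nat -> I :=
  fun l => t (l + i)%N.

Definition fiber (R : realType) (X : Type) (I : Type) (alpha : X -> X)
  (U : I -> set X) (g : I -> I -> X -> R[i]) (n : nat) (x : X)
  (v : (nat -> I) -> R[i]) : Prop :=
  forall t t', Un alpha U n t x -> Un alpha U n t' x ->
    v t = gn alpha g n t t' x * v t'.

Definition fiber_eq (R : realType) (X : Type) (I : Type) (alpha : X -> X)
  (U : I -> set X) (n : nat) (x : X) (v w : (nat -> I) -> R[i]) : Prop :=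
  forall t, Un alpha U n t x -> v t = w t.

Definition is_section (R : realType) (X : topologicalType) (I : Type)
  (alpha : X -> X) (U : I -> set X) (g : I -> I -> X -> R[i]) (n : nat)
  (G : X -> (nat -> I) -> R[i]) : Prop :=
  (forall x, fiber alpha U g n x (G x)) /\
  (forall t, ccontinuous_within (Un alpha U n t) (fun x => G x t)).

(* sig is a continuous section of End(D^(n)) restricted to A, where         *)
(* D^(n) = V^(0) (+) ... (+) V^(n-1); in the chart t (trivialising all the   *)
(* V^(p), p < n, at once) sig x t is the n x n matrix (entries p q, p,q < n) *)
(* of sig(x); the matrices transform by conjugation with the diagonal        *)
(* transition matrix diag(gn p t t' x)_p.                                    *)
Definition end_section (R : realType) (X : topologicalType) (I : Type)
  (alpha : X -> X) (U : I -> set X) (g : I -> I -> X -> R[i]) (n : nat)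
  (A : set X) (sig : X -> (nat -> I) -> nat -> nat -> R[i]) : Prop :=
  (forall x t t' p q, A x -> Un alpha U n t x -> Un alpha U n t' x ->
     (p < n)%N -> (q < n)%N ->
     sig x t p q * gn alpha g q t t' x = gn alpha g p t t' x * sig x t' p q) /\
  (forall t p q, (p < n)%N -> (q < n)%N ->
     ccontinuous_within (A `&` Un alpha U n t) (fun x => sig x t p q)).

(* m-th subdiagonal matrix representation: sig(x) maps V^(q) into V^(q+m)   *)
(* (into 0 when q+m >= n), i.e. the q-th column is supported on row q+m.     *)
Definition subdiag (R : realType) (X : Type) (I : Type) (alpha : X -> X)
  (U : I -> set X) (n m : nat) (A : set X)
  (sig : X -> (nat -> I) -> nat -> nat -> R[i]) : Prop :=
  forall x t p q, A x -> Un alpha U n t x -> (p < n)%N -> (q < n)%N ->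
    p != (q + m)%N -> sig x t p q = 0.

(* w is sig^(i)(x) \in V^(m)_{alpha^i x}: for i < n - m it is the unique w   *)
(* with sig(x) v = w (x) v for all v \in V^(i)_x (using                      *)
(* V^(i+m)_x = V^(m)_{alpha^i x} (x) V^(i)_x, whose coordinates in chart t  *)
(* are w (shiftn i t) * v t); for n - m <= i it is 0.                        *)
Definition sub_comp (R : realType) (X : Type) (I : Type) (alpha : X -> X)
  (U : I -> set X) (g : I -> I -> X -> R[i]) (n m : nat)
  (sig : X -> (nat -> I) -> nat -> nat -> R[i]) (x : X) (i : nat)
  (w : (nat -> I) -> R[i]) : Prop :=
  fiber alpha U g m (iter i alpha x) w /\
  (if (i + m < n)%N then
     forall (v : (nat -> I) -> R[i]) t, fiber alpha U g i x v ->
       Un alpha U n t x -> sig x t (i + m)%N i * v t = w (shiftn i t) * v t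
   else fiber_eq alpha U m (iter i alpha x) w (fun _ => 0)).

(* R_s = r_{t_1} + ... + r_{t_s} (0-based list ts = [t_1; ...; t_p]) *)
Definition Rs (r : nat -> nat) (ts : seq nat) (s : nat) : nat :=
  (\sum_(j < s) r (nth 0%N ts j))%N.

Definition boundary_decomp (R : realType) (X : topologicalType) (I : Type)
  (alpha : X -> X) (U : I -> set X) (Y : set X) (K : nat) (r : nat -> nat)
  (sig : nat -> X -> (nat -> I) -> nat -> nat -> R[i]) : Prop :=
  forall k x, (1 <= k <= K)%N -> closure (Yk alpha Y r k) x ->
    ~ Yk alpha Y r k x ->
    exists ts : seq nat,
      [/\ all (fun t => (1 <= t < k)%N) ts,
          (\sum_(t <- ts) r t)%N = r k,
          forall s, (s < size ts)%N ->
            Yk alpha Y r (nth 0%N ts s) (iter (Rs r ts s) alpha x) &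
          forall s t p q, (s < size ts)%N -> Un alpha U (r k) t x ->
            (Rs r ts s <= q < Rs r ts s.+1)%N -> (p < r k)%N ->
            sig k x t p q =
              if (Rs r ts s <= p < Rs r ts s.+1)%N then
                sig (nth 0%N ts s) (iter (Rs r ts s) alpha x)
                    (shiftn (Rs r ts s) t) (p - Rs r ts s)%N (q - Rs r ts s)%N
              else 0].

(* Main.v *)
Require Import Defs.
From HB Require Import structures.
From mathcomp Require Import all_boot all_order all_algebra.
From mathcomp Require Import all_classical all_reals all_analysis.
From mathcomp.real_closed Require Import complex.
From mathcomp Require Import zify.
Set Implicit Arguments. Unset Strict Implicit. Unset Printing Implicit Defensive.
Import Order.TTheory GRing.Theory Num.Theory.
Import numFieldNormedType.Exports.
Local Open Scope classical_set_scope.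
Local Open Scope ring_scope.

Lemma near_all_lt (T : Type) (F : set_system T) {FF : Filter F}
  (P : nat -> T -> Prop) (N : nat) :
  (forall n, (n < N)%N -> F (P n)) -> F (fun z => forall n, (n < N)%N -> P n z).
Proof.
elim: N => [|N IH] H.
  by apply: filterS filterT => z _ n.
have H1 : F (fun z => forall n, (n < N)%N -> P n z).
  by apply: IH => n hn; apply: H; exact: ltnW.
apply: (filterS _ (filterI (H N (ltnSn N)) H1)) => z [Pz Hz] n; rewrite ltnS leq_eqVlt => /orP[/eqP->//|].
exact: Hz.
Qed.

Lemma paste_cont (T S : topologicalType) (A : set T) (f : T -> S)
  (Q : nat -> nat -> set T) (N1 N2 : nat) :
  (forall a b, (a < N1)%N -> (b < N2)%N -> closed (Q a b)) ->
  (forall z, A z -> exists a b, [/\ (a < N1)%N, (b < N2)%N & Q a b z]) ->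
  (forall a b z0, (a < N1)%N -> (b < N2)%N -> A z0 -> Q a b z0 ->
     forall V, nbhs (f z0) V -> \forall z \near z0, A z -> Q a b z -> V (f z)) ->
  {within A, continuous f}.
Proof.
move=> Qcl Qcov Qct; apply/subspace_continuousP => z0 Az0 V HV.
rewrite /= /within /=.
have H : forall a, (a < N1)%N -> \forall z \near z0,
    forall b, (b < N2)%N -> A z -> Q a b z -> V (f z).
  move=> a ha; apply: near_all_lt => b hb.
  have [Qz0|nQz0] := pselect (Q a b z0); first exact: Qct.
  have : nbhs z0 (~` Q a b).
    by apply: open_nbhs_nbhs; split => //; apply: closed_openC; exact: Qcl.
  by apply: filterS => z nQ _ /nQ.
have HH := @near_all_lt _ (nbhs z0) (nbhs_filter z0) _ N1 H.
suff: nbhs z0 (fun z => A z -> V (f z)) by [].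
apply: (filterS _ HH) => z Hz Az.
have [a [b [ha hb Qz]]] := Qcov z Az.
exact: (Hz a ha b hb Az Qz).
Qed.

Lemma cont_iter (T : topologicalType) (f : T -> T) n :
  continuous f -> continuous (iter n f).
Proof.
move=> cf; elim: n => [|n IH] x /=; first exact: cvg_id.
exact: (continuous_comp (IH x) (cf _)).
Qed.

Lemma iter_cancel (T : Type) (f h : T -> T) n : cancel f h ->
  cancel (iter n f) (iter n h).
Proof.
move=> fh; elim: n => [|n IH] x //.
by rewrite iterSr iterS fh IH.
Qed.

Section Charts.
Variables (R : realType) (X : topologicalType) (alpha : X -> X) (I : Type)
  (U : I -> set X) (g : I -> I -> X -> R[i]).
Hypothesis Hg : hlb_data U g.

Lemma g_id j x : U j x -> g j j x = 1.
Proof.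
case: Hg => _ _ _ Hn Hc Ux.
have h := Hc j j j x Ux Ux Ux.
have n0 : g j j x != 0 by rewrite -normr_eq0 (Hn _ _ _ Ux Ux) oner_eq0.
by apply: (mulfI n0); rewrite h mulr1.
Qed.

Lemma g_neq0 i j x : U i x -> U j x -> g i j x != 0.
Proof. by case: Hg => _ _ _ Hn _ Ui Uj; rewrite -normr_eq0 (Hn _ _ _ Ui Uj) oner_eq0. Qed.

Lemma Un_le n1 n2 t x : (n1 <= n2)%N -> Un alpha U n2 t x -> Un alpha U n1 t x.
Proof. by move=> le H l hl; apply: H; exact: leq_trans hl le. Qed.

Lemma Un_shift a b t x : Un alpha U (a + b) t x ->
  Un alpha U b (shiftn a t) (iter a alpha x).
Proof.
move=> H l hl; rewrite /shiftn -iterD; apply: H; by rewrite addnC ltn_add2l.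
Qed.

Lemma gn_neq0 n t t' x : Un alpha U n t x -> Un alpha U n t' x ->
  gn alpha g n t t' x != 0.
Proof.
move=> H H'; rewrite /gn; apply/prodf_neq0 => l _; apply: g_neq0.
exact: H. exact: H'.
Qed.

Lemma gn_cocycle n t1 t2 t3 x : Un alpha U n t1 x -> Un alpha U n t2 x ->
  Un alpha U n t3 x -> gn alpha g n t1 t2 x * gn alpha g n t2 t3 x = gn alpha g n t1 t3 x.
Proof.
move=> H1 H2 H3; rewrite /gn -big_split /=; apply: eq_bigr => l _.
case: Hg => _ _ _ _ Hc; apply: Hc; [exact: H1|exact: H2|exact: H3].
Qed.

Lemma gn_same n t t' x : (forall l, (l < n)%N -> t l = t' l) ->
  Un alpha U n t x -> gn alpha g n t t' x = 1.
Proof.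
move=> E H; rewrite /gn; apply: big1 => l _.
rewrite -(E l (ltn_ord l)); apply: g_id; exact: H.
Qed.

Lemma gn_split a b t t' x : gn alpha g (a + b) t t' x =
  gn alpha g a t t' x * gn alpha g b (shiftn a t) (shiftn a t') (iter a alpha x).
Proof.
rewrite /gn big_split_ord /=; congr (_ * _); apply: eq_bigr => l _.
by rewrite /shiftn /= -iterD addnC.
Qed.

Hypothesis calpha : continuous alpha.

Lemma Un_open n t : open (Un alpha U n t).
Proof.
rewrite openE => x Hx; rewrite /interior.
apply: (@near_all_lt _ (nbhs x) (nbhs_filter x) (fun l z => U (t l) (iter l alpha z)) n) => l hl.
have := @cont_iter _ alpha l calpha x; apply.
apply: open_nbhs_nbhs; split; last exact: Hx.
by case: Hg.
Qed.

End Charts.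

Lemma Rs_S r ts s : Rs r ts s.+1 = (Rs r ts s + r (nth 0%N ts s))%N.
Proof. by rewrite /Rs big_ord_recr. Qed.

Lemma Rs_mono r ts a b : (a <= b)%N -> (Rs r ts a <= Rs r ts b)%N.
Proof.
move=> /subnK <-; elim: (b - a)%N => [//|d IH].
by rewrite addSn Rs_S; apply: leq_trans IH (leq_addr _ _).
Qed.

Lemma Rs_size r ts : Rs r ts (size ts) = (\sum_(t <- ts) r t)%N.
Proof. by rewrite /Rs (big_nth 0%N) big_mkord. Qed.

Lemma Rs_find r ts n i : (i < Rs r ts n)%N ->
  exists s, [/\ (s < n)%N, (Rs r ts s <= i)%N & (i < Rs r ts s.+1)%N].
Proof.
elim: n => [|n IH]; first by rewrite /Rs big_ord0.
move=> h; have [lt|ge] := ltnP i (Rs r ts n).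
  by have [s [h1 h2 h3]] := IH lt; exists s; split => //; apply: ltnW.
by exists n; split.
Qed.

Section Main.
Variables (R : realType) (X : pseudoMetricType R) (alpha beta : X -> X)
  (I : Type) (U : I -> set X) (g : I -> I -> X -> R[i])
  (Y : set X) (K : nat) (r : nat -> nat)
  (sig : nat -> X -> (nat -> I) -> nat -> nat -> R[i]) (m : nat).
Hypotheses (Hcpt : compact [set: X]) (Hh : homeo alpha beta)
  (Hmin : minimal_homeo alpha beta) (Hg : hlb_data U g)
  (HY : closed Y) (HYi : interior Y !=set0)
  (Hrv : return_values alpha Y K r)
  (Hend : forall k, (1 <= k <= K)%N ->
     end_section alpha U g (r k) (closure (Yk alpha Y r k)) (sig k))
  (Hbd : boundary_decomp alpha U Y K r sig)
  (HmK : (m < r K)%N)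
  (Hsub : forall k, (1 <= k <= K)%N ->
     subdiag alpha U (r k) m (closure (Yk alpha Y r k)) (sig k)).

Local Notation Ykk := (Yk alpha Y r).

Lemma ab z : alpha (beta z) = z. Proof. by case: Hh. Qed.
Lemma ba z : beta (alpha z) = z. Proof. by case: Hh. Qed.
Lemma iab n z : iter n alpha (iter n beta z) = z.
Proof. exact: (iter_cancel n ab). Qed.
Lemma iba n z : iter n beta (iter n alpha z) = z.
Proof. exact: (iter_cancel n ba). Qed.

Lemma fr_uniq y n1 n2 : first_return alpha Y y n1 -> first_return alpha Y y n2 ->
  n1 = n2.
Proof.
case=> p1 Y1 H1 [p2 Y2 H2].
have [lt|gt|//] := ltngtP n1 n2.
- by exfalso; apply: (H2 n1) => //; rewrite p1 lt.
- by exfalso; apply: (H1 n2) => //; rewrite p2 gt.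
Qed.

Lemma r_mono k l : (1 <= k)%N -> (k < l)%N -> (l <= K)%N -> (r k < r l)%N.
Proof. by case: Hrv => H _ _; apply: H. Qed.

Lemma r_inj k l : (1 <= k <= K)%N -> (1 <= l <= K)%N -> r k = r l -> k = l.
Proof.
move=> /andP[k1 kK] /andP[l1 lK] E.
have [lt|gt|//] := ltngtP k l.
- by have := r_mono k1 lt lK; rewrite E ltnn.
- by have := r_mono l1 gt kK; rewrite E ltnn.
Qed.

Lemma r_leK k : (1 <= k <= K)%N -> (r k <= r K)%N.
Proof.
move=> /andP[k1 kK]; move: kK; rewrite leq_eqVlt => /orP[/eqP->//|lt].
by apply: ltnW; apply: r_mono.
Qed.

Lemma r_pos k : (1 <= k <= K)%N -> (0 < r k)%N.
Proof. by case: Hrv => _ H _ /H [y _ []]. Qed.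

Lemma Yk_closure k : Ykk k `<=` closure (Ykk k).
Proof. exact: subset_closure. Qed.

Lemma closure_Y k y : closure (Ykk k) y -> Y y.
Proof.
move=> c; have : closure Y y by apply: (closureS _ c) => z [].
by move/HY.
Qed.

Lemma closure_ret k y : closure (Ykk k) y -> Y (iter (r k) alpha y).
Proof.
move=> c.
have cl : closed ((iter (r k) alpha) @^-1` Y).
  apply: preimage_closed => // x _; apply: cont_iter; by case: Hh.
apply: cl; apply: (closureS _ c) => z [_ []] //.
Qed.

Lemma Y_in_some y : Y y -> exists2 k, (1 <= k <= K)%N & Ykk k y.
Proof. by case: Hrv => _ _ H /[dup] Yy /H [k hk fr]; exists k. Qed.


Definition Pc k i := [set z | [/\ (1 <= k <= K)%N, (i < r k)%N &
  closure (Ykk k) (iter i beta z)]].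
Definition Tow := [set z | exists k i, Pc k i z].

Lemma cbeta n : continuous (iter n beta).
Proof. by apply: cont_iter; case: Hh. Qed.
Lemma calpha n : continuous (iter n alpha).
Proof. by apply: cont_iter; case: Hh. Qed.

Lemma Pc_closed k i : closed (Pc k i).
Proof.
have [c|nc] := pselect ((1 <= k <= K)%N /\ (i < r k)%N).
  have -> : Pc k i = (iter i beta) @^-1` closure (Ykk k).
    by apply/seteqP; split => z /=; [case|move=> h; split; case: c].
  apply: preimage_closed; last exact: closed_closure.
  by move=> x _; apply: cbeta.
have -> : Pc k i = set0.
  by apply/seteqP; split => z //= [h1 h2 _]; apply: nc.
exact: closed0.
Qed.

Lemma Tow_closed : closed Tow.
Proof.
have op : open (~` Tow).
  rewrite openE => x nx; rewrite /interior.
  have H : forall k, (k < K.+1)%N -> \forall z \near x,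
      forall i, (i < r K)%N -> ~ Pc k i z.
    move=> k hk; apply: (@near_all_lt _ (nbhs x) (nbhs_filter x)) => i hi.
    have nP : ~ Pc k i x by move=> P; apply: nx; exists k, i.
    apply: open_nbhs_nbhs; split => //; apply: closed_openC; exact: Pc_closed.
  apply: filterS (@near_all_lt _ (nbhs x) (nbhs_filter x) _ _ H).
  move=> z Hz [k [i P]]; case: (P) => /andP[k1 kK] ik _.
  apply: (Hz k _ i _ P); first by rewrite ltnS.
  by apply: leq_trans ik _; apply: r_leK; rewrite k1.
by have := open_closedC op; rewrite setCK.
Qed.

Lemma Tow_alpha z : Tow z -> Tow (alpha z).
Proof.
move=> [k [i [hk ik c]]].
have [lt|hge] := ltnP i.+1 (r k).
  by exists k, i.+1; split => //; rewrite iterSr ba.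
have ei : i.+1 = r k by apply/eqP; rewrite eqn_leq ik hge.
have Yz : Y (alpha z).
  have := closure_ret c; rewrite -ei iterS iab //.
have [k' hk' Yk'] := Y_in_some Yz.
exists k', 0%N; split => //; first exact: r_pos.
exact: Yk_closure.
Qed.

Lemma Tow_all z : Tow z.
Proof.
have [y0 /interior_subset Yy0] := HYi.
have [k0 hk0 Yk0] := Y_in_some Yy0.
have T0 : Tow y0 by exists k0, 0%N; split => //; [exact: r_pos|exact: Yk_closure].
have Tn : forall n, Tow (iter n alpha y0).
  by elim=> [//|n IH]; rewrite iterS; apply: Tow_alpha.
pose Fn n := (iter n beta) @^-1` Tow.
have Fcl : forall n, closed (Fn n).
  move=> n; apply: preimage_closed; last exact: Tow_closed.
  by move=> x _; apply: cbeta.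
have Fnest : forall n, Fn n.+1 `<=` Fn n.
  move=> n x; rewrite /Fn /= => h.
  by have := Tow_alpha h; rewrite ab.
have Fmono : forall a b, (a <= b)%N -> Fn b `<=` Fn a.
  move=> a b /subnK <-; elim: (b - a)%N => [//|d IH] x.
  by rewrite addSn => /Fnest /IH.
have Fne : forall n, Fn n !=set0.
  by move=> n; exists (iter n alpha y0); rewrite /Fn /= iba.
pose F := filter_from setT Fn.
have FF : Filter F.
  apply: filter_from_filter; first by exists 0%N.
  move=> a b _ _; exists (maxn a b) => // x Fx; split.
    by apply: (Fmono a (maxn a b)) => //; rewrite leq_maxl.
  by apply: (Fmono b (maxn a b)) => //; rewrite leq_maxr.
have PF : ProperFilter F by apply: filter_from_proper => n _; exact: Fne.
have [p [_ cp]] := Hcpt PF (filterT).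
have Sp : forall n, Tow (iter n beta p).
  move=> n; apply: (Fcl n) => B nB.
  by apply: cp => //; exists n.
have Sa : forall q, (forall n, Tow (iter n beta q)) ->
    forall n, Tow (iter n beta (alpha q)).
  move=> q Hq [|n]; first by apply: Tow_alpha; exact: (Hq 0%N).
  by rewrite iterSr ba.
have orbT : forall y, (exists n : nat, y = iter n alpha p \/ y = iter n beta p) -> Tow y.
  move=> y [n [->|->]]; last exact: Sp.
  have : forall n, forall j, Tow (iter j beta (iter n alpha p)).
    elim=> [|n' IH] j; first exact: Sp.
    by rewrite iterS; apply: Sa.
  by move/(_ n 0%N).
apply: Tow_closed; apply: (closureS orbT).
by rewrite Hmin.
Qed.


Definition Wit z (t' : nat -> I) k i y (t : nat -> I) :=
  [/\ (1 <= k <= K)%N, (i < r k)%N, closure (Ykk k) y, iter i alpha y = z &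
      Un alpha U (r k) t y /\ forall l, (l < m)%N -> t (l + i)%N = t' l].

Definition cval k i y t : R[i] :=
  if (i + m < r k)%N then sig k y t (i + m)%N i else 0.

Lemma genuine_uniq_aux k1 i1 y1 k2 i2 y2 :
  Ykk k1 y1 -> Ykk k2 y2 -> (i2 < r k2)%N -> (i1 <= i2)%N ->
  iter i1 alpha y1 = iter i2 alpha y2 -> i1 = i2 /\ y1 = y2.
Proof.
move=> [Y1 _] [_ [_ _ F2]] i2r le E.
have E2 : iter i2 alpha y2 = iter i1 alpha (iter (i2 - i1) alpha y2).
  by rewrite -iterD subnKC.
have Ey : y1 = iter (i2 - i1) alpha y2.
  by rewrite -(iba i1 y1) E E2 iba.
have [d0|dpos] := eqVneq (i2 - i1)%N 0%N.
  split; last by rewrite Ey d0.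
  by apply/eqP; rewrite eqn_leq le /= -subn_eq0 d0.
exfalso; apply: (F2 (i2 - i1)%N); last by rewrite -Ey.
rewrite lt0n dpos /=; apply: leq_ltn_trans i2r; exact: leq_subr.
Qed.

Lemma genuine_uniq k1 i1 y1 k2 i2 y2 :
  (1 <= k1 <= K)%N -> (1 <= k2 <= K)%N ->
  Ykk k1 y1 -> Ykk k2 y2 -> (i1 < r k1)%N -> (i2 < r k2)%N ->
  iter i1 alpha y1 = iter i2 alpha y2 -> [/\ k1 = k2, i1 = i2 & y1 = y2].
Proof.
move=> hk1 hk2 Y1 Y2 h1 h2 E.
have [ei ey] : i1 = i2 /\ y1 = y2.
  have [le|lt] := leqP i1 i2; first exact: (genuine_uniq_aux Y1 Y2).
  have [a b] := genuine_uniq_aux Y2 Y1 h1 (ltnW lt) (esym E).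
  by split.
split => //; apply: r_inj => //.
by case: Y1 => _ F1; case: Y2 => _; rewrite -ey; apply: fr_uniq.
Qed.

Lemma cval_same_base k i y t1 t2 :
  (1 <= k <= K)%N -> closure (Ykk k) y -> (i < r k)%N ->
  Un alpha U (r k) t1 y -> Un alpha U (r k) t2 y ->
  (forall l, (l < m)%N -> t1 (l + i)%N = t2 (l + i)%N) ->
  cval k i y t1 = cval k i y t2.
Proof.
move=> hk c ir H1 H2 E; rewrite /cval; case: ifP => // h.
have := (Hend hk).1 y t1 t2 (i + m)%N i c H1 H2 h ir.
rewrite gn_split.
have Hs : Un alpha U m (shiftn i t1) (iter i alpha y).
  by apply: Un_shift; apply: Un_le H1; exact: ltnW.
have G1 : gn alpha g m (shiftn i t1) (shiftn i t2) (iter i alpha y) = 1.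
  by apply: (gn_same Hg) => // l hl; rewrite /shiftn E.
rewrite G1 mulr1 mulrC => h2.
have nz : gn alpha g i t1 t2 y != 0.
  by apply: (gn_neq0 Hg); [exact: (Un_le (ltnW ir) H1)|exact: (Un_le (ltnW ir) H2)].
exact: (mulfI nz h2).
Qed.

Lemma reduce z t' k i y t : Wit z t' k i y t ->
  exists k' i' y' t'', [/\ Wit z t' k' i' y' t'', Ykk k' y' &
     cval k i y t = cval k' i' y' t''].
Proof.
case=> hk ir c ez [Ht Et].
have [Yky|nY] := pselect (Ykk k y); first by exists k, i, y, t.
have [ts [Hall Hsum Hin Hsig]] := Hbd hk c nY.
have rkE : r k = Rs r ts (size ts) by rewrite Rs_size Hsum.
have [s [ss Ra Rb]] : exists s, [/\ (s < size ts)%N, (Rs r ts s <= i)%N &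
    (i < Rs r ts s.+1)%N] by apply: Rs_find; rewrite -rkE.
set k' := nth 0%N ts s; set a := Rs r ts s.
have RbE : Rs r ts s.+1 = (a + r k')%N by rewrite Rs_S.
have Rble : (Rs r ts s.+1 <= r k)%N by rewrite rkE; apply: Rs_mono.
have hk' : (1 <= k' <= K)%N.
  have /andP[h1 h2] := (allP Hall) _ (mem_nth 0%N ss).
  by rewrite h1 /=; case/andP: hk => _ kK; apply: leq_trans kK; apply: ltnW.
exists k', (i - a)%N, (iter a alpha y), (shiftn a t); split.
- split => //.
  + by move: Rb; rewrite RbE; lia.
  + exact: Yk_closure (Hin s ss).
  + by rewrite -iterD subnK.
  + split.
      apply: Un_shift; apply: (Un_le _ Ht); by rewrite -RbE.
    move=> l hl; rewrite /shiftn.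
    have -> : (l + (i - a) + a = l + i)%N by lia.
    exact: Et.
- exact: Hin s ss.
- rewrite /cval; case: ifP => h1.
    rewrite (Hsig s t (i + m)%N i ss Ht); last first.
    + exact: h1.
    + by rewrite Ra Rb.
    rewrite -/a -/k'.
    have -> : (i + m - a = i - a + m)%N by lia.
    case: ifP => h2; case: ifP => h3 //.
    + by exfalso; move: h2 h3; rewrite RbE; lia.
    + by exfalso; move: h2 h3; rewrite RbE; lia.
  case: ifP => h2 //.
  by exfalso; move: h1 h2 Rble; rewrite RbE; lia.
Qed.

Lemma cval_consistent z t' k1 i1 y1 t1 k2 i2 y2 t2 :
  Wit z t' k1 i1 y1 t1 -> Wit z t' k2 i2 y2 t2 ->
  cval k1 i1 y1 t1 = cval k2 i2 y2 t2.
Proof.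
move=> /reduce [a1 [j1 [x1 [s1 [W1 Y1 ->]]]]].
move=> /reduce [a2 [j2 [x2 [s2 [W2 Y2 ->]]]]].
case: W1 => ha1 hj1 c1 e1 [Hs1 Es1]; case: W2 => ha2 hj2 c2 e2 [Hs2 Es2].
have [ea ej ex] := genuine_uniq ha1 ha2 Y1 Y2 hj1 hj2 (etrans e1 (esym e2)).
subst a2 j2 x2.
apply: cval_same_base => // l hl; by rewrite Es1 // Es2.
Qed.

Lemma chart_choice : exists ch : X -> I, forall x, U (ch x) x.
Proof.
case: Hg => _ cov _ _ _.
by exists (fun x => projT1 (cid (cov x))) => x; exact: (projT2 (cid (cov x))).
Qed.

Lemma wit_exists z t' k i y : (1 <= k <= K)%N -> (i < r k)%N ->
  closure (Ykk k) y -> iter i alpha y = z -> Un alpha U m t' z ->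
  exists t, Wit z t' k i y t.
Proof.
move=> hk ir c ez Ht'.
have [ch Hch] := chart_choice.
exists (fun l => if (i <= l < i + m)%N then t' (l - i)%N else ch (iter l alpha y)).
split => //; split.
  move=> l hl /=; case: ifP => h; last exact: Hch.
  have := Ht' (l - i)%N; rewrite -ez -iterD subnK; last by case/andP: h.
  by apply; move: h; lia.
move=> l hl /=; case: ifP => h; first by rewrite addnK.
by exfalso; move: h; lia.
Qed.

Definition Gdef z t' : R[i] :=
  xget 0 [set c | exists k i y t, Wit z t' k i y t /\ c = cval k i y t].

Lemma G_val z t' k i y t : Wit z t' k i y t -> Gdef z t' = cval k i y t.
Proof.
move=> W; apply: xget_unique; first by exists k, i, y, t.
move=> c /= [k2 [i2 [y2 [t2 [W2 ->]]]]]; exact: (cval_consistent W2 W).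
Qed.

Lemma Tow_wit z t' : Un alpha U m t' z -> exists k i t,
  Wit z t' k i (iter i beta z) t.
Proof.
move=> Ht; have [k [i [hk ir c]]] := Tow_all z.
have [t W] := wit_exists hk ir c (iab i z) Ht.
by exists k, i, t.
Qed.

Lemma G_fiber x : fiber alpha U g m x (Gdef x).
Proof.
move=> t1' t2' H1' H2'.
have [k [i [hk ir c]]] := Tow_all x.
have [t1 W1] := wit_exists hk ir c (iab i x) H1'.
have [t2 W2] := wit_exists hk ir c (iab i x) H2'.
rewrite (G_val W1) (G_val W2) /cval.
case: ifP => h; last by rewrite mulr0.
case: W1 => _ _ _ _ [Ht1 Et1]; case: W2 => _ _ _ _ [Ht2 Et2].
have := (Hend hk).1 _ t1 t2 (i + m)%N i c Ht1 Ht2 h ir.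
rewrite gn_split.
have -> : gn alpha g m (shiftn i t1) (shiftn i t2) (iter i alpha (iter i beta x))
    = gn alpha g m t1' t2' x.
  by rewrite iab /gn; apply: eq_bigr => l _; rewrite /shiftn Et1 // Et2.
have nz : gn alpha g i t1 t2 (iter i beta x) != 0.
  by apply: (gn_neq0 Hg); [exact: (Un_le (ltnW ir) Ht1)|exact: (Un_le (ltnW ir) Ht2)].
rewrite mulrC -mulrA => E; exact: (mulfI nz E).
Qed.

Definition part (b : bool) (c : R[i]) : R := if b then complex.Re c else complex.Im c.

Lemma part_cont (A : set X) (h : X -> R[i]) b :
  ccontinuous_within A h -> {within A, continuous (fun x => part b (h x))}.
Proof. by case: b => -[]. Qed.

Lemma G_cont t' b :
  {within Un alpha U m t', continuous (fun x => part b (Gdef x t'))}.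
Proof.
apply: (@paste_cont _ _ _ _ Pc K.+1 (r K)).
- by move=> a c _ _; exact: Pc_closed.
- move=> z _; have [k [i P]] := Tow_all z; exists k, i; split => //.
  + by case: P => /andP[_ kK]; rewrite ltnS.
  + by case: P => hk ir _; apply: leq_trans ir _; apply: r_leK.
move=> k i z0 _ _ Az0 P0 V HV.
case: (P0) => hk ir c0.
set y0 := iter i beta z0.
have [t W0] := wit_exists hk ir c0 (iab i z0) Az0.
case: (W0) => _ _ _ _ [Ht Et].
pose D := closure (Ykk k) `&` Un alpha U (r k) t.
set h := (fun y => part b (cval k i y t)).
have hc : {within D, continuous h}.
  have [hh|hh] := boolP (i + m < r k)%N.
    have -> : h = (fun y => part b (sig k y t (i + m)%N i)).
      by apply: funext => y; rewrite /h /cval hh.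
    by apply: part_cont; exact: ((Hend hk).2 t _ _ hh ir).
  have -> : h = (fun y => part b 0).
    by apply: funext => y; rewrite /h /cval (negbTE hh).
  by apply: continuous_subspaceT; exact: cst_continuous.
have Dy0 : D y0 by split.
have hy0 : h y0 = part b (Gdef z0 t') by rewrite /h (G_val W0).
have HV' : nbhs (h y0) V by rewrite hy0.
have hV := (subspace_continuousP _ _).1 hc y0 Dy0 V HV'.
have hV2 : nbhs y0 (fun y => D y -> V (h y)) by exact: hV.
have h1 : \forall z \near z0, D (iter i beta z) -> V (h (iter i beta z)).
  exact: (@cbeta i z0 _ hV2).
have h2 : \forall z \near z0, Un alpha U (r k) t (iter i beta z).
  apply: (@cbeta i z0); apply: open_nbhs_nbhs; split => //.
  by case: Hh => ca _ _ _; exact: (Un_open Hg ca).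
have h3 := @filterI _ (nbhs z0) (nbhs_filter z0) _ _ h1 h2.
apply: (@filterS _ (nbhs z0) (nbhs_filter z0) _ _ _ h3) => z [H1 H2] Az [_ _ cz].
have Wz : Wit z t' k i (iter i beta z) t by split => //; exact: iab.
rewrite (G_val Wz); exact: H1.
Qed.

Lemma G_sub k i x w : (1 <= k <= K)%N -> (i < r k)%N -> closure (Ykk k) x ->
  sub_comp alpha U g (r k) m (sig k) x i w ->
  fiber_eq alpha U m (iter i alpha x) (Gdef (iter i alpha x)) w.
Proof.
move=> hk ir c [Fw Hw] t' Ht'.
have [t W] := wit_exists hk ir c erefl Ht'.
rewrite (G_val W) /cval; case: W => _ _ _ _ [Ht Et].
move: Hw; case: ifP => h Hw; last by rewrite Hw.
have Hti : Un alpha U i t x by exact: (Un_le (ltnW ir) Ht).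
pose v t0 := gn alpha g i t0 t x.
have Fv : fiber alpha U g i x v.
  by move=> ta tb Ha Hb; rewrite /v (gn_cocycle Hg Ha Hb Hti).
have := Hw v t Fv Ht; rewrite /v (gn_same Hg _ Hti) // !mulr1 => ->.
have Hs : Un alpha U m (shiftn i t) (iter i alpha x).
  by apply: Un_shift; apply: Un_le Ht; exact: ltnW.
rewrite (Fw _ _ Hs Ht') (gn_same Hg _ Hs) ?mul1r //.
Qed.

Lemma G_zero x j : (1 <= j <= m)%N -> Y (iter j alpha x) ->
  fiber_eq alpha U m x (Gdef x) (fun _ => 0).
Proof.
move=> hj Yj t' Ht'.
have [k [i [t W]]] := Tow_wit Ht'.
have [k' [i' [y' [t'' [W' Yk' E]]]]] := reduce W.
rewrite (G_val W') /cval.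
case: ifP => // h; exfalso.
case: W' => _ ir _ ez _; case: Yk' => _ [_ _ F].
apply: (F (i' + j)%N).
  by apply/andP; split; [move: hj; lia|move: hj h; lia].
by rewrite addnC iterD ez.
Qed.

End Main.

Theorem lemma8p3 (R : realType) (X : pseudoMetricType R)
  (alpha beta : X -> X) (I : Type) (U : I -> set X) (g : I -> I -> X -> R[i])
  (Y : set X) (K : nat) (r : nat -> nat)
  (sig : nat -> X -> (nat -> I) -> nat -> nat -> R[i]) (m : nat) :
  hausdorff_space X -> compact [set: X] -> ~ finite_set [set: X] ->
  homeo alpha beta -> minimal_homeo alpha beta ->
  hlb_data U g ->
  closed Y -> interior Y !=set0 ->
  return_values alpha Y K r ->
  (forall k, (1 <= k <= K)%N ->
     end_section alpha U g (r k) (closure (Yk alpha Y r k)) (sig k)) ->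
  boundary_decomp alpha U Y K r sig ->
  (m < r K)%N ->
  (forall k, (1 <= k <= K)%N ->
     subdiag alpha U (r k) m (closure (Yk alpha Y r k)) (sig k)) ->
  exists G : X -> (nat -> I) -> R[i],
    [/\ is_section alpha U g m G,
        forall k i x w, (1 <= k <= K)%N -> (i < r k)%N ->
          closure (Yk alpha Y r k) x ->
          sub_comp alpha U g (r k) m (sig k) x i w ->
          fiber_eq alpha U m (iter i alpha x) (G (iter i alpha x)) w &
        (1 <= m)%N -> forall x j, (1 <= j <= m)%N -> Y (iter j alpha x) ->
          fiber_eq alpha U m x (G x) (fun _ => 0)].
Proof.
move=> _ Hcpt _ Hh Hmin Hg HY HYi Hrv Hend Hbd HmK Hsub.
exists (Gdef alpha U Y K r sig m); split.
- split; first by move=> x; exact: (G_fiber Hcpt Hh Hmin Hg HY HYi Hrv Hend Hbd HmK).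
  move=> t; split.
    exact: (G_cont Hcpt Hh Hmin Hg HY HYi Hrv Hend Hbd HmK (t':=t) (b:=true)).
  exact: (G_cont Hcpt Hh Hmin Hg HY HYi Hrv Hend Hbd HmK (t':=t) (b:=false)).
- by move=> k i x w hk ir c sc; exact: (G_sub Hh Hg Hrv Hend Hbd HmK hk ir c sc).
- by move=> _ x j hj Yj; exact: (G_zero Hcpt Hh Hmin Hg HY HYi Hrv Hend Hbd HmK hj Yj).
Qed.
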